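(* For every $T$, every sequence of forecasts $\mathbf p\in[0,1]^T$ and every sequence of outcomes $\mathbf x\in\{0,1\}^T$, $$\tfrac12\,\mathrm{MaxAgentReg}(\mathbf p,\mathbf x)\le \mathrm{VCal}(\mathbf p,\mathbf x)\le \mathrm{MaxAgentReg}(\mathbf p,\mathbf x).$$
   Context: A binary scoring rule is $\ell:[0,1]\times\{0,1\}\to\mathbb R$; with $\ell(p;q)=(1-q)\ell(p,0)+q\ell(p,1)$ it is proper if $\ell(p;p)\le\ell(p';p)$ for all $p,p'$. Let $\mathcal L$ be the set of proper scoring rules with values in $[-1,1]$. For $\beta=\frac1T\sum_tx_t$, $\mathrm{Reg}_\ell(\mathbf p,\mathbf x)=\sum_t\ell(p_t,x_t)-\sum_t\ell(\beta,x_t)$, and the U-calibration error is $\mathrm{MaxAgentReg}(\mathbf p,\mathbf x)=\sup_{\ell\in\mathcal L}\mathrm{Reg}_\ell(\mathbf p,\mathbf x)$. For $v\in[0,1]$ the V-shaped scoring rule $\ell_v$ is defined by $\ell_v(p,0)=v\,\mathrm{sgn}(p-v)$ and $\ell_v(p,1)=(1-v)\,\mathrm{sgn}(v-p)$, where $\mathrm{sgn}(0)=0$; its univariate form is $\ell_v(p;p)=-|p-v|$. The V-calibration error is $\mathrm{VCal}(\mathbf p,\mathbf x)=\sup_{v\in[0,1]}\mathrm{Reg}_{\ell_v}(\mathbf p,\mathbf x)$. *)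

(* Defs.v *)
From HB Require Import structures.
From mathcomp Require Import all_boot all_order all_algebra.
From mathcomp Require Import boolp classical_sets reals.
Set Implicit Arguments. Unset Strict Implicit. Unset Printing Implicit Defensive.
Import Order.TTheory GRing.Theory Num.Theory.
Local Open Scope ring_scope.
Local Open Scope classical_set_scope.

Section Defs.
Variable R : realType.

(* a binary scoring rule l(p, y); outcome y : bool (false = 0, true = 1) *)
Definition scoring_rule := R -> bool -> R.

Definition exp_score (l : scoring_rule) (p q : R) : R :=
  (1 - q) * l p false + q * l p true.

Definition proper (l : scoring_rule) : Prop :=
  forall p p' : R, 0 <= p <= 1 -> 0 <= p' <= 1 ->
    exp_score l p p <= exp_score l p' p.

Definition in_L (l : scoring_rule) : Prop :=
  proper l /\ forall p y, 0 <= p <= 1 -> -1 <= l p y <= 1.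

Definition beta (T : nat) (x : 'I_T -> bool) : R :=
  (\sum_(t < T) ((x t : nat)%:R : R)) / T%:R.

Definition Reg (l : scoring_rule) (T : nat) (p : 'I_T -> R) (x : 'I_T -> bool) : R :=
  \sum_(t < T) l (p t) (x t) - \sum_(t < T) l (beta x) (x t).

Definition MaxAgentReg (T : nat) (p : 'I_T -> R) (x : 'I_T -> bool) : R :=
  sup [set r | exists l, in_L l /\ r = Reg l p x].

Definition Vrule (v : R) : scoring_rule :=
  fun p y => if y then (1 - v) * Num.sg (v - p) else v * Num.sg (p - v).

Definition VCal (T : nat) (p : 'I_T -> R) (x : 'I_T -> bool) : R :=
  sup [set r | exists v : R, 0 <= v <= 1 /\ r = Reg (Vrule v) p x].

End Defs.

(* Main.v *)
Require Import Defs.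
From HB Require Import structures.
From mathcomp Require Import all_boot all_order all_algebra.
From mathcomp Require Import boolp classical_sets reals.
From mathcomp Require Import ring lra.
Import Order.TTheory GRing.Theory Num.Theory.
Local Open Scope ring_scope.
Local Open Scope classical_set_scope.

Definition RR {R : realType} (f : R -> R -> R) (obs : seq (R * (R * R))) : R :=
  \sum_(o <- obs) o.2.2 * f o.1 o.2.1.

Definition sl {R : realType} (l : scoring_rule R) (z : R) := l z true - l z false.

Lemma exp_scoreE (R : realType) (l : scoring_rule R) z q :
  exp_score l z q = l z false + q * sl l z.
Proof. rewrite /exp_score /sl; ring. Qed.

Lemma VsE (R : realType) (v z q : R) :
  exp_score (Vrule v) z q = (q - v) * Num.sg (v - z).
Proof.
rewrite /exp_score /Vrule.
have -> : Num.sg (z - v) = - Num.sg (v - z) by rewrite -sgrN opprB.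
ring.
Qed.

Lemma RR_affine (R : realType) (obs : seq (R * (R * R))) (A B : R) :
  \sum_(o <- obs) o.2.2 = 0 -> \sum_(o <- obs) o.2.2 * o.2.1 = 0 ->
  RR (fun _ q => A + q * B) obs = 0.
Proof.
move=> h1 h2; rewrite /RR.
under eq_bigr do rewrite mulrDr mulrA.
by rewrite big_split /= -!mulr_suml h1 h2 !mul0r addr0.
Qed.

Lemma path_le_last (R : realType) (a : R) (P : seq R) :
  path <%R a P -> forall z, z \in a :: P -> z <= last a P.
Proof.
elim: P a => [|b P IH] a /=.
  by move=> _ z; rewrite inE => /eqP ->.
move=> /andP [hab hp] z; rewrite inE => /orP [/eqP ->|hz].
  apply: le_trans (ltW hab) _; apply: IH => //; exact: mem_head.
exact: IH.
Qed.

Lemma small_delta (R : realType) (K g e : R) :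
  0 <= K -> 0 < g -> 0 < e -> exists2 d : R, 0 < d < g & K * d <= e / 2.
Proof.
move=> hK hg he.
have hden : 0 < 2 * (e + K * g) by nra.
exists (g * e / (2 * (e + K * g))).
  apply/andP; split; first by apply: divr_gt0; nra.
  by rewrite ltr_pdivrMr //; nra.
rewrite mulrA ler_pdivrMr //.
have -> : e / 2 * (2 * (e + K * g)) = e * (e + K * g) by field.
nra.
Qed.

Lemma main_ind (R : realType) (l : scoring_rule R) (Hp : Defs.proper l) (S : R)
  (a : R) (P : seq R) (obs : seq (R * (R * R))) :
  0 <= a -> last a P <= 1 -> path <%R a P ->
  (forall o, o \in obs -> o.1 \in a :: P) ->
  \sum_(o <- obs) o.2.2 = 0 -> \sum_(o <- obs) o.2.2 * o.2.1 = 0 ->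
  (forall v, a < v < last a P -> v \notin a :: P ->
     RR (exp_score (Vrule v)) obs <= S) ->
  forall e, 0 < e ->
  RR (exp_score l) obs <= (sl l a - sl l (last a P)) / 2 * S + e.
Proof.
elim/last_ind: P obs => [|P r IH] obs ha hl hpath hmem h1 h2 hS e he.
  have -> : RR (exp_score l) obs = RR (fun _ q => l a false + q * sl l a) obs.
    rewrite /RR; apply: eq_big_seq => o /hmem; rewrite inE => /eqP ->.
    by rewrite exp_scoreE.
  by rewrite RR_affine //= subrr mul0r mul0r add0r ltW.
rewrite last_rcons in hl hS *.
move: hpath; rewrite rcons_path => /andP [hpath hr].
set r' := last a P in hr hpath IH *.
have hle : forall z, z \in a :: P -> z <= r' := @path_le_last R a P hpath.
have hr'0 : 0 <= r' := le_trans ha (hle a (mem_head _ _)).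
have hr'1 : r' <= 1 := le_trans (ltW hr) hl.
have hr0 : 0 <= r := le_trans hr'0 (ltW hr).
set obs' := [seq (if o.1 == r then r' else o.1, o.2) | o <- obs].
have IH' := IH obs' ha hr'1 hpath.
have {}IH' : RR (exp_score l) obs' <= (sl l a - sl l r') / 2 * S + e / 2.
  apply: IH' => //.
  - move=> o /mapP [o0 ho0 ->] /=; case: ifP => [_|hne]; first exact: mem_last.
    have := hmem _ ho0; by rewrite -rcons_cons mem_rcons inE hne.
  - by rewrite big_map.
  - by rewrite big_map.
  - move=> v /andP [hav hvr'] hvn.
    have -> : RR (exp_score (Vrule v)) obs' = RR (exp_score (Vrule v)) obs.
      rewrite /RR big_map; apply: eq_bigr => o _ /=; case: ifP => // /eqP ->.
      rewrite !VsE !ltr0_sg // subr_lt0 //; exact: lt_trans hvr' hr.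
    apply: hS; first by rewrite hav /= (lt_trans hvr' hr).
    by rewrite -rcons_cons mem_rcons inE negb_or hvn andbT (lt_eqF (lt_trans hvr' hr)).
  - by rewrite divr_gt0.
set d := sl l r - sl l r'.
set D0 := l r false - l r' false.
have Dr : D0 + r * d <= 0.
  have := Hp r r' _ _; rewrite !exp_scoreE /D0 /d.
  move=> H; have := H _ _; rewrite ?hr0 ?hr'0 ?hl ?hr'1 //; lra.
have Dr' : 0 <= D0 + r' * d.
  have := Hp r' r _ _; rewrite !exp_scoreE /D0 /d.
  move=> H; have := H _ _; rewrite ?hr0 ?hr'0 ?hl ?hr'1 //; lra.
have hd : d <= 0 by nra.
set N := \sum_(o <- obs) (if o.1 == r then o.2.2 else 0).
set M := \sum_(o <- obs) (if o.1 == r then o.2.2 * o.2.1 else 0).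
have hsplit : RR (exp_score l) obs = RR (exp_score l) obs' + (N * D0 + M * d).
  rewrite /RR big_map /N /M !mulr_suml -!big_split /=; apply: eq_bigr => o _.
  by case: ifP => [/eqP ->|_]; rewrite ?exp_scoreE /D0 /d; ring.
have hV : forall v, r' < v < r -> RR (exp_score (Vrule v)) obs = 2 * (N * v - M).
  move=> v /andP [hv1 hv2]; rewrite /RR /N /M.
  rewrite (eq_big_seq (fun o => (o.2.2 * o.2.1 - v * o.2.2) + (2 * v * (if o.1 == r then o.2.2 else 0) - 2 * (if o.1 == r then o.2.2 * o.2.1 else 0)))).
    by rewrite big_split /= !sumrB -!mulr_sumr h2 h1; ring.
  move=> o /hmem; rewrite VsE; case: ifP => [/eqP ->|hne] hz.
    by rewrite ltr0_sg ?subr_lt0 //; ring.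
  have hz' : o.1 \in a :: P by move: hz; rewrite -rcons_cons mem_rcons inE hne.
  have hlt : o.1 < v := le_lt_trans (hle _ hz') hv1.
  by rewrite gtr0_sg ?subr_gt0 //; ring.
have hg : 0 < r - r' by rewrite subr_gt0.
have [del /andP [hdel0 hdelg] hdelK] := @small_delta R (`|N| * `|d|) (r - r') e (mulr_ge0 (normr_ge0 _) (normr_ge0 _)) hg he.
set v := if 0 <= N then r - del else r' + del.
have hv : r' < v < r.
  by rewrite /v; case: ifP => _; apply/andP; split; lra.
have hk : N * (D0 + d * v) <= e / 2.
  rewrite /v; case: ifP => hN.
    have h3 : N * (D0 + r * d) <= 0 by apply: mulr_ge0_le0.
    rewrite (ger0_norm hN) (ler0_norm hd) in hdelK; nra.
  have hN' : N < 0 by rewrite ltNge hN.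
  have h3 : N * (D0 + r' * d) <= 0 by apply: mulr_le0_ge0 => //; exact: ltW.
  rewrite (ltr0_norm hN') (ler0_norm hd) in hdelK; nra.
have hextra : N * D0 + M * d <= (- d / 2) * RR (exp_score (Vrule v)) obs + e / 2.
  rewrite hV //.
  have -> : - d / 2 * (2 * (N * v - M)) = - (N * (d * v)) + d * M by field.
  have -> : N * D0 + M * d = N * (D0 + d * v) - N * (d * v) + d * M by ring.
  lra.
have hVS : RR (exp_score (Vrule v)) obs <= S.
  move: hv => /andP [hv1 hv2]; apply: hS.
    by rewrite hv2 andbT; apply: le_lt_trans hv1; apply: hle; exact: mem_head.
  rewrite -rcons_cons mem_rcons inE negb_or (lt_eqF hv2) /=.
  apply/negP => /hle; rewrite leNgt hv1 //.
rewrite hsplit.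
have hd2 : 0 <= - d / 2 by lra.
apply: le_trans (lerD IH' (le_trans hextra (lerD (ler_wpM2l hd2 hVS) (lexx _)))) _.
have E : forall x y : R, x = y -> x <= y by move=> x y ->.
by apply: E; rewrite /d; field.
Qed.

Lemma exp_score_bool (R : realType) (l : scoring_rule R) z (b : bool) :
  exp_score l z (b%:R) = l z b.
Proof. by case: b; rewrite /exp_score /=; ring. Qed.

Lemma sg_bounds (R : realType) (u : R) : -1 <= Num.sg u <= 1.
Proof.
case: (ltrgtP u 0) => h.
- by rewrite ltr0_sg //; apply/andP; split; lra.
- by rewrite gtr0_sg //; apply/andP; split; lra.
- by rewrite h sgr0; apply/andP; split; lra.
Qed.

Lemma Vrule_in_L (R : realType) (v : R) : 0 <= v <= 1 -> in_L (Vrule v).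
Proof.
move=> /andP [hv0 hv1]; split.
  move=> p0 p' _ _; rewrite !VsE.
  case: (ltrgtP v p0) => h.
  - rewrite ltr0_sg ?subr_lt0 //.
    have := @sg_bounds R (v - p'); move=> /andP [s1 s2]; nra.
  - rewrite gtr0_sg ?subr_gt0 //.
    have := @sg_bounds R (v - p'); move=> /andP [s1 s2]; nra.
  - by rewrite h subrr !mul0r.
move=> p0 y _; rewrite /Vrule.
case: y.
  have := @sg_bounds R (v - p0); move=> /andP [s1 s2]; apply/andP; split; nra.
have := @sg_bounds R (p0 - v); move=> /andP [s1 s2]; apply/andP; split; nra.
Qed.

Lemma Reg_le (R : realType) (T : nat) (p : 'I_T -> R) (x : 'I_T -> bool) (l : scoring_rule R) :
  (forall t, 0 <= p t <= 1) -> 0 <= beta R x <= 1 -> in_L l -> Reg l p x <= 2 * T%:R.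
Proof.
move=> hp hb [_ hl]; rewrite /Reg.
have h1 : \sum_(t < T) l (p t) (x t) <= \sum_(t < T) (1 : R).
  by apply: ler_sum => t _; have /andP [] := hl (p t) (x t) (hp t).
have h2 : \sum_(t < T) (-1 : R) <= \sum_(t < T) l (beta R x) (x t).
  by apply: ler_sum => t _; have /andP [] := hl (beta R x) (x t) hb.
move: h1 h2; rewrite sumrN sumr_const card_ord => h1 h2; lra.
Qed.

Theorem theorem4p2 (R : realType) (T : nat) (p : 'I_T -> R) (x : 'I_T -> bool) :
  (forall t, 0 <= p t <= 1) ->
  MaxAgentReg p x / 2 <= VCal p x /\ VCal p x <= MaxAgentReg p x.
Proof.
move=> hp.
set b := beta R x.
have hsumle : \sum_(t < T) ((x t : nat)%:R : R) <= T%:R.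
  have <- : \sum_(t < T) (1 : R) = T%:R by rewrite sumr_const card_ord.
  by apply: ler_sum => t _; case: (x t); rewrite ?mulr1n ?mulr0n ?ler01.
have hsum0 : 0 <= \sum_(t < T) ((x t : nat)%:R : R).
  by apply: sumr_ge0 => t _; apply: ler0n.
have hsum : \sum_(t < T) ((x t : nat)%:R : R) = b * T%:R.
  rewrite /b /beta; have [hT|hT] := eqVneq (T%:R : R) 0.
    by rewrite hT mulr0; apply/eqP; rewrite eq_le hsum0 andbT; apply: le_trans hsumle _; rewrite hT.
  by rewrite mulfVK.
have hb : 0 <= b <= 1.
  rewrite /b /beta; have [hT|hT] := eqVneq (T%:R : R) 0.
    by rewrite hT invr0 mulr0 lexx ler01.
  have hT' : 0 < (T%:R : R) by rewrite lt_def hT ler0n.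
  by rewrite divr_ge0 //= ler_pdivrMr // mul1r.
set A := [set r : R | exists l, in_L l /\ r = Reg l p x].
set V := [set r : R | exists v : R, 0 <= v <= 1 /\ r = Reg (Vrule v) p x].
have hMA : MaxAgentReg p x = sup A by [].
have hVC : VCal p x = sup V by [].
have hAub : ubound A (2 * T%:R) by move=> r [l [hl ->]]; exact: Reg_le.
have hA0 : A !=set0.
  exists (Reg (fun _ _ => 0) p x); exists (fun _ _ => 0); split => //; split.
    by move=> *; rewrite /exp_score !mulr0 addr0.
  by move=> *; rewrite lerN10 ler01.
have hVA : V `<=` A.
  by move=> r [v [hv ->]]; exists (Vrule v); split => //; exact: Vrule_in_L.
have hV0 : V !=set0 by exists (Reg (Vrule 0) p x), 0; split => //; rewrite lexx ler01.
have hAh : has_ubound A by exists (2 * T%:R).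
have hVh : has_ubound V by exists (2 * T%:R) => r /hVA; apply: hAub.
have hVpos : 0 <= VCal p x.
  have hmem1 : V (Reg (Vrule 1) p x).
    by exists 1; split; [rewrite ler01 lexx | reflexivity].
  have h1m := ub_le_sup hVh hmem1.
  rewrite hVC; apply: le_trans h1m.
  have e2 : \sum_(t < T) Vrule 1 b (x t) = \sum_(t < T) (((x t : nat)%:R : R) - 1).
    under eq_bigr do rewrite -(@exp_score_bool R (Vrule 1)) VsE.
    rewrite -mulr_suml.
    have -> : \sum_(t < T) (((x t : nat)%:R : R) - 1) = (b - 1) * T%:R.
      by rewrite sumrB hsum sumr_const card_ord mulrBl mul1r.
    case/andP: hb => hb0 hb1; case: (ltrgtP b 1) => hb2.
    - by rewrite gtr0_sg ?mulr1 // subr_gt0.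
    - lra.
    - by rewrite hb2 subrr !mul0r.
  rewrite /Reg e2 -sumrB; apply: sumr_ge0 => t _.
  rewrite -(@exp_score_bool R (Vrule 1)) VsE.
  have := @sg_bounds R (1 - p t); case: (x t) => /= /andP [s1 s2]; nra.
split; last first.
  rewrite hVC hMA. refine (ge_sup hV0 _). move=> r hr; exact: (ub_le_sup hAh (hVA _ hr)).
rewrite ler_pdivrMr // hMA; refine (ge_sup hA0 _) => r [l [hl ->]].
set obs := [seq (p t, (((x t : nat)%:R : R), (1 : R))) | t <- index_enum 'I_T] ++
           [seq (b, (((x t : nat)%:R : R), (-1 : R))) | t <- index_enum 'I_T].
have hRR : forall f : scoring_rule R, RR (exp_score f) obs = Reg f p x.
  move=> f; rewrite /RR big_cat !big_map /= /Reg.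
  under eq_bigr do rewrite mul1r exp_score_bool.
  under [X in _ + X]eq_bigr do rewrite mulN1r exp_score_bool.
  by rewrite sumrN.
have hc1 : \sum_(o <- obs) o.2.2 = 0.
  by rewrite big_cat !big_map /= sumrN addrN.
have hc2 : \sum_(o <- obs) o.2.2 * o.2.1 = 0.
  rewrite big_cat !big_map /=.
  under eq_bigr do rewrite mul1r.
  under [X in _ + X]eq_bigr do rewrite mulN1r.
  by rewrite sumrN addrN.
set pts := sort <=%O (undup (b :: [seq p t | t <- index_enum 'I_T])).
have hsorted : sorted <%O pts by rewrite sort_lt_sorted undup_uniq.
have hpts : forall z, z \in pts -> 0 <= z <= 1.
  by move=> z; rewrite mem_sort mem_undup inE => /orP [/eqP ->|/mapP [t _ ->]].
have hobs : forall o, o \in obs -> o.1 \in pts.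
  move=> o; rewrite mem_cat => /orP [] /mapP [t _ ->] /=;
    rewrite mem_sort mem_undup inE ?eqxx //.
  by rewrite map_f ?orbT // mem_index_enum.
have hbpts : b \in pts by rewrite mem_sort mem_undup mem_head.
move: hsorted hpts hobs hbpts; case: pts => [|a P] //= hsorted hpts hobs _.
have ha0 : 0 <= a by have /andP [] := hpts a (mem_head _ _).
have hL1 : last a P <= 1 by have /andP [] := hpts (last a P) (mem_last _ _).
have hS : forall v, a < v < last a P -> v \notin a :: P ->
    RR (exp_score (Vrule v)) obs <= VCal p x.
  move=> v /andP [h1 h2] _; rewrite hRR hVC.
  have hvV : V (Reg (Vrule v) p x) by exists v; split => //; apply/andP; split; lra.
  exact: (ub_le_sup hVh hvV).
have key : forall e, 0 < e ->
    Reg l p x <= (sl l a - sl l (last a P)) / 2 * VCal p x + e.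
  move=> e he; rewrite -hRR.
  exact: (@main_ind R l hl.1 (VCal p x) a P obs ha0 hL1 hsorted hobs hc1 hc2 hS e he).
have hK : (sl l a - sl l (last a P)) / 2 <= 2.
  have ha : 0 <= a <= 1 by exact: hpts (mem_head _ _).
  have hL : 0 <= last a P <= 1 by exact: hpts (mem_last _ _).
  have /andP [u1 u2] := hl.2 a true ha.
  have /andP [u3 u4] := hl.2 a false ha.
  have /andP [u5 u6] := hl.2 (last a P) true hL.
  have /andP [u7 u8] := hl.2 (last a P) false hL.
  rewrite /sl; lra.
apply: (@le_trans _ _ ((sl l a - sl l (last a P)) / 2 * VCal p x)).
  by apply/ler_addgt0Pr.
by rewrite [X in _ <= X]mulrC; apply: ler_wpM2r.
Qed.
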